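(* Let $X,Y$ be $c$-free with respect to $(\varphi,\psi)$ on $\mathbb{C}\langle X,Y\rangle$, let $A,B\in M_N(\mathbb{C})$, $\mathbf{\Psi}=(I-z(AX+BY))^{-1}$, and $F^\varphi_X=\beta^{\delta,\varphi}_X(X\mathbf{\Psi})$, $F^\varphi_Y=\beta^{\delta,\varphi}_Y(Y\mathbf{\Psi})$. Then $$M^\varphi_{AX+BY}(z):=\varphi(\mathbf{\Psi})=(I-zAF^\varphi_X-zBF^\varphi_Y)^{-1}.$$ Consequently, if $P\in\mathbb{C}\langle X,Y\rangle$ has degree $m$ and $u,v\in\mathbb{C}^N$ are such that $(1-z^mP)^{-1}=u^t\mathbf{\Psi}v$ as formal power series, then $M^\varphi_{P}(z^m):=\sum_{n\ge0}\varphi(P^n)z^{mn}=u^tM^\varphi_{AX+BY}(z)v$.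
   Context: $X,Y$ are $c$-free w.r.t. $(\varphi,\psi)$ (unital functionals on $\mathbb{C}\langle X,Y\rangle$) if $\psi(u_1\cdots u_n)=0$ and $\varphi(u_1\cdots u_n)=\prod\varphi(u_j)$ whenever the $u_j$ alternate between $\mathbb{C}\langle X\rangle$ and $\mathbb{C}\langle Y\rangle$ and $\psi(u_j)=0$. Boolean cumulants $\beta^\theta_n$ of $\theta$: $\theta(a_1\cdots a_n)=\sum_{k}\beta^\theta_k(a_1,\dots,a_k)\theta(a_{k+1}\cdots a_n)$. $\beta^{\delta,\varphi}_X(1)=1$ and $\beta^{\delta,\varphi}_X(Z_1\cdots Z_k)=\beta^\varphi_k(Z_1,\dots,Z_k)$ ($Z_i\in\{X,Y\}$) if $Z_1=Z_k=X$, else $0$; $\beta^{\delta,\varphi}_Y$ analogously; extended linearly. $\mathbf{\Psi}=\sum_n z^n(AX+BY)^n$; functionals act entrywise on matrices and coefficientwise on formal power series in $z$, and inverses are formal power series inverses. *)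

(* Defs.v *)
From HB Require Import structures.
From mathcomp Require Import all_boot all_order all_algebra.
Set Implicit Arguments. Unset Strict Implicit. Unset Printing Implicit Defensive.
Import Order.TTheory GRing.Theory.
Local Open Scope ring_scope.

(* Letters of the free monoid on {X, Y}: X is [false], Y is [true].         *)
Notation lX := false.
Notation lY := true.
Definition word := seq bool.

Section NC.
Variable C : fieldType.

(* Elements of C<X,Y> are represented as finite formal linear combinations  *)
(* of words (a list of (coefficient, word) pairs).  Two representations     *)
(* denote the same polynomial iff [nccoef] agrees on every word.            *)
Definition ncp := seq (C * word).
Definition ncone : ncp := [:: (1, [::])].
Definition ncvar (b : bool) : ncp := [:: (1, [:: b])].
Definition ncadd (p q : ncp) : ncp := p ++ q.
Definition ncscale (c : C) (p : ncp) : ncp := [seq (c * a.1, a.2) | a <- p].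
Definition ncmul (p q : ncp) : ncp :=
  [seq (a.1 * b.1, a.2 ++ b.2) | a <- p, b <- q].
Definition ncpow (p : ncp) (n : nat) : ncp := iter n (ncmul p) ncone.
Definition nccoef (p : ncp) (w : word) : C := \sum_(a <- p | a.2 == w) a.1.

(* A linear functional on C<X,Y> is determined by its values on words;     *)
Definition nceval (f : word -> C) (p : ncp) : C := \sum_(a <- p) a.1 * f a.2.

Definition ncpoly1 (b : bool) (p : {poly C}) : ncp :=
  [seq (p`_i, nseq i b) | i <- iota 0 (size p)].

(* c-freeness of X, Y w.r.t. (phi, psi).  A family u_1..u_n is a list of  *)
(* (variable, one-variable polynomial) pairs.                              *)
Definition alternating (s : seq (bool * {poly C})) : Prop :=
  forall i, (i.+1 < size s)%N -> (nth (lX, 0) s i).1 != (nth (lX, 0) s i.+1).1.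

Definition c_free (phi psi : word -> C) : Prop :=
  forall s : seq (bool * {poly C}), (0 < size s)%N -> alternating s ->
    (forall a, a \in s -> nceval psi (ncpoly1 a.1 a.2) = 0) ->
    nceval psi (foldr (fun a q => ncmul (ncpoly1 a.1 a.2) q) ncone s) = 0 /\
    nceval phi (foldr (fun a q => ncmul (ncpoly1 a.1 a.2) q) ncone s) =
      \prod_(a <- s) nceval phi (ncpoly1 a.1 a.2).

(* Boolean cumulants of theta on words of letters:                          *)
(* theta(a_1..a_n) = sum_{k=1}^n beta_k(a_1..a_k) theta(a_{k+1}..a_n),       *)
(* solved recursively (fuel = length of the word).                          *)
Fixpoint bcum_fuel (theta : word -> C) (n : nat) (w : word) : C :=
  match n with
  | 0 => 0
  | n'.+1 => theta w -
      \sum_(1 <= k < size w) bcum_fuel theta n' (take k w) * theta (drop k w)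
  end.
Definition bcum (theta : word -> C) (w : word) : C :=
  bcum_fuel theta (size w) w.

Definition bdelta (phi : word -> C) (b : bool) (w : word) : C :=
  match w with
  | [::] => 1
  | x :: _ => if (x == b) && (last x w == b) then bcum phi w else 0
  end.

Variable N : nat.

Definition ncmx := 'M[ncp]_N.
Definition ncmx1 : ncmx := \matrix_(i, j) (if i == j then ncone else [::]).
Definition ncmx_mul (P Q : ncmx) : ncmx :=
  \matrix_(i, j) flatten [seq ncmul (P i k) (Q k j) | k <- enum 'I_N].
Definition pencil (A B : 'M[C]_N) : ncmx :=
  \matrix_(i, j) ncadd (ncscale (A i j) (ncvar lX)) (ncscale (B i j) (ncvar lY)).
Definition pencil_pow (A B : 'M[C]_N) (n : nat) : ncmx :=
  iter n (ncmx_mul (pencil A B)) ncmx1.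
Definition mxapply (f : word -> C) (P : ncmx) : 'M[C]_N :=
  \matrix_(i, j) nceval f (P i j).

(* Formal power series in z with coefficients in M_N(C): n-th coefficient. *)
Definition mser := nat -> 'M[C]_N.
Fixpoint ser_inv_seq (S : mser) (n : nat) : seq 'M[C]_N :=
  match n with
  | 0 => [:: invmx (S 0%N)]
  | n'.+1 => let l := ser_inv_seq S n' in
      rcons l (- invmx (S 0%N) *m
               \sum_(1 <= k < n'.+2) (S k *m nth 0 l (n'.+1 - k)))
  end.
Definition ser_inv (S : mser) : mser := fun n => nth 0 (ser_inv_seq S n) n.

(* Psi = sum_n z^n (AX+BY)^n; its n-th coefficient is pencil_pow A B n.     *)
Definition Mphi (phi : word -> C) (A B : 'M[C]_N) : mser :=
  fun n => mxapply phi (pencil_pow A B n).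
Definition Fphi (phi : word -> C) (b : bool) (A B : 'M[C]_N) : mser :=
  fun n => mxapply (bdelta phi b)
             (\matrix_(i, j) ncmul (ncvar b) (pencil_pow A B n i j)).
Definition denom (phi : word -> C) (A B : 'M[C]_N) : mser :=
  fun n => match n with
           | 0 => 1%:M
           | n'.+1 => - (A *m Fphi phi lX A B n') - (B *m Fphi phi lY A B n')
           end.

(* u^t Psi v, coefficient of z^k, as an element of C<X,Y>. *)
Definition uPsiv (A B : 'M[C]_N) (u v : 'cV[C]_N) (k : nat) : ncp :=
  flatten [seq ncscale (u i 0 * v j 0) (pencil_pow A B k i j)
          | i <- enum 'I_N, j <- enum 'I_N].

Definition ncdeg_eq (P : ncp) (m : nat) : Prop :=
  (exists w, size w = m /\ nccoef P w != 0) /\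
  (forall w, nccoef P w != 0 -> (size w <= m)%N).

(* (1 - z^m P)^{-1} = sum_n z^{mn} P^n (m >= 1): coefficient of z^k. *)
Definition geo (P : ncp) (m k : nat) : ncp :=
  if (m %| k)%N then ncpow P (k %/ m) else [::].
End NC.

(* Main.v *)
Require Import Defs.
From mathcomp Require Import all_boot all_order all_algebra zify ring.
Import GRing.Theory.
Local Open Scope ring_scope.
Set Implicit Arguments. Unset Strict Implicit.

Section Gen.
Variable C : fieldType.
Variable T : Type.
Variable Phi : seq T -> C.

Fixpoint bcf (n : nat) (s : seq T) : C :=
  match n with
  | 0 => 0
  | n'.+1 => Phi s - \sum_(1 <= k < size s) bcf n' (take k s) * Phi (drop k s)
  end.
Definition bc s := bcf (size s) s.

Lemma bcf_eq n m s : (0 < size s)%N -> (size s <= n)%N -> (size s <= m)%N ->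
  bcf n s = bcf m s.
Proof.
elim: n m s => [|n IH] [|m] s Hs Hn Hm //=; try lia.
- congr (_ - _); apply: eq_big_nat => k /andP[k1 ks].
  rewrite (IH m) // size_take ks //; lia.
Qed.

Lemma bcE s : (0 < size s)%N ->
  bc s = Phi s - \sum_(0 <= k < (size s).-1) bc (take k.+1 s) * Phi (drop k.+1 s).
Proof.
rewrite /bc; case Es: (size s) => [|n] //= _.
rewrite big_add1 /=; congr (_ - _).
rewrite Es /=; apply: eq_big_nat => k /andP[_ kn]; congr (_ * _).
have Hk : size (take k.+1 s) = k.+1 by rewrite size_take Es ltnS kn.
rewrite Hk; apply: bcf_eq; rewrite ?Hk //; lia.
Qed.
End Gen.


Lemma sum_split (C : fieldType) (F : nat -> C) m n :
  \sum_(0 <= k < m + n) F k = \sum_(0 <= k < m) F k + \sum_(0 <= j < n) F (m + j)%N.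
Proof.
rewrite (big_cat_nat _ (n:=m)) ?leq_addr //; congr (_ + _).
rewrite -{1}[m]add0n big_addn addKn; apply: eq_bigr => i _; by rewrite addnC.
Qed.

Section S.
Variable T : Type.
Lemma dropl_cat k (s1 t : seq T) : (k <= size s1)%N -> drop k (s1 ++ t) = drop k s1 ++ t.
Proof.
rewrite drop_cat leq_eqVlt => /orP[/eqP->|->] //.
by rewrite ltnn subnn drop_size drop0.
Qed.
Lemma taker_cat k (s1 t : seq T) : take (size s1 + k) (s1 ++ t) = s1 ++ take k t.
Proof. by rewrite take_cat ltnNge leq_addr /= addKn. Qed.
Lemma dropr_cat k (s1 t : seq T) : drop (size s1 + k) (s1 ++ t) = drop k t.
Proof. by rewrite drop_cat ltnNge leq_addr /= addKn. Qed.
End S.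

Section Merge.
Variable C : fieldType.
Variable T : Type.
Variable Phi : seq T -> C.
Variables a b m : T.
Hypothesis Hm : forall s1 s2, Phi (s1 ++ m :: s2) = Phi (s1 ++ a :: b :: s2).

Lemma bc_merge s2 s1 :
  bc Phi (s1 ++ a :: b :: s2) = bc Phi (s1 ++ m :: s2) - bc Phi (rcons s1 a) * bc Phi (b :: s2).
Proof.
elim: {s2}(size s2).+1 {-2}s2 (ltnSn (size s2)) s1 => // n IH s2 Hs2 s1.
rewrite (bcE _ (s:=s1 ++ a :: b :: s2)); last by rewrite size_cat addnS.
rewrite (bcE _ (s:=s1 ++ m :: s2)); last by rewrite size_cat addnS.
have -> : (size (s1 ++ a :: b :: s2)).-1 = (size s1 + (size s2).+1)%N by rewrite size_cat /= addnS.
have -> : (size (s1 ++ m :: s2)).-1 = (size s1 + size s2)%N by rewrite size_cat /= addnS.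
rewrite !sum_split big_nat_recl //= addn0.
have E1 : forall k, (k < size s1)%N ->
   bc Phi (take k.+1 (s1 ++ a :: b :: s2)) * Phi (drop k.+1 (s1 ++ a :: b :: s2)) =
   bc Phi (take k.+1 (s1 ++ m :: s2)) * Phi (drop k.+1 (s1 ++ m :: s2)).
  by move=> k Hk; rewrite !takel_cat // !dropl_cat // Hm.
rewrite (eq_big_nat _ _ (fun k (H : (0 <= k < size s1)%N) => E1 k (andP H).2)).
rewrite -addn1 taker_cat -addn1 dropr_cat /= cats1.
have E2 : forall j, (j < size s2)%N ->
  bc Phi (take (size s1 + j.+1).+1 (s1 ++ a :: b :: s2)) * Phi (drop (size s1 + j.+1).+1 (s1 ++ a :: b :: s2))
  = (bc Phi (s1 ++ m :: take j s2) - bc Phi (rcons s1 a) * bc Phi (b :: take j s2)) * Phi (drop j s2).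
  move=> j Hj; rewrite -!addnS taker_cat dropr_cat /= IH //.
  rewrite size_take; case: ifP => //; lia.
rewrite (eq_big_nat _ _ (fun k (H : (0 <= k < size s2)%N) => E2 k (andP H).2)).
have E3 : forall j, (j < size s2)%N ->
  bc Phi (take (size s1 + j).+1 (s1 ++ m :: s2)) * Phi (drop (size s1 + j).+1 (s1 ++ m :: s2))
  = bc Phi (s1 ++ m :: take j s2) * Phi (drop j s2).
  by move=> j Hj; rewrite -!addnS taker_cat dropr_cat.
rewrite (eq_big_nat _ _ (fun k (H : (0 <= k < size s2)%N) => E3 k (andP H).2)).
rewrite (bcE Phi (s := b :: s2)) //=.
have E4 : \sum_(0 <= i < size s2)
       (bc Phi (s1 ++ m :: take i s2) - bc Phi (rcons s1 a) * bc Phi (b :: take i s2)) * Phi (drop i s2)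
  = \sum_(0 <= i < size s2) bc Phi (s1 ++ m :: take i s2) * Phi (drop i s2)
    - bc Phi (rcons s1 a) * \sum_(0 <= i < size s2) bc Phi (b :: take i s2) * Phi (drop i s2).
  by rewrite mulr_sumr -sumrB; apply: eq_bigr => i _; ring.
rewrite E4 Hm; ring.
Qed.
End Merge.

Section Lin.
Variable C : fieldType.
Variable T : Type.
Variable Phi : seq T -> C.
Variables a b c : T.
Variable l : C.
Hypothesis Hl : forall s1 s2, Phi (s1 ++ c :: s2) = l * Phi (s1 ++ a :: s2) + Phi (s1 ++ b :: s2).

Lemma bc_lin s2 s1 :
  bc Phi (s1 ++ c :: s2) = l * bc Phi (s1 ++ a :: s2) + bc Phi (s1 ++ b :: s2).
Proof.
elim: {s2}(size s2).+1 {-2}s2 (ltnSn (size s2)) s1 => // n IH s2 Hs2 s1.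
have Hsz : forall x, (size (s1 ++ x :: s2)).-1 = (size s1 + size s2)%N by move=> x; rewrite size_cat /= addnS.
rewrite (bcE _ (s:=s1 ++ c :: s2)); last by rewrite size_cat addnS.
rewrite (bcE _ (s:=s1 ++ a :: s2)); last by rewrite size_cat addnS.
rewrite (bcE _ (s:=s1 ++ b :: s2)); last by rewrite size_cat addnS.
rewrite !Hsz !sum_split.
have E1 : forall x k, (k < size s1)%N ->
   bc Phi (take k.+1 (s1 ++ x :: s2)) * Phi (drop k.+1 (s1 ++ x :: s2)) =
   bc Phi (take k.+1 s1) * Phi (drop k.+1 s1 ++ x :: s2).
  by move=> x k Hk; rewrite !takel_cat // !dropl_cat.
have E2 : forall x j, (j < size s2)%N ->
  bc Phi (take (size s1 + j).+1 (s1 ++ x :: s2)) * Phi (drop (size s1 + j).+1 (s1 ++ x :: s2))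
  = bc Phi (s1 ++ x :: take j s2) * Phi (drop j s2).
  by move=> x j Hj; rewrite -!addnS taker_cat dropr_cat.
rewrite !(eq_big_nat _ _ (fun k (H : (0 <= k < size s1)%N) => E1 _ k (andP H).2)).
rewrite !(eq_big_nat _ _ (fun k (H : (0 <= k < size s2)%N) => E2 _ k (andP H).2)).
have E3 : \sum_(0 <= i < size s1) bc Phi (take i.+1 s1) * Phi (drop i.+1 s1 ++ c :: s2) =
  l * \sum_(0 <= i < size s1) bc Phi (take i.+1 s1) * Phi (drop i.+1 s1 ++ a :: s2) +
  \sum_(0 <= i < size s1) bc Phi (take i.+1 s1) * Phi (drop i.+1 s1 ++ b :: s2).
  by rewrite mulr_sumr -big_split; apply: eq_bigr => i _; rewrite Hl /=; ring.
have E4 : \sum_(0 <= i < size s2) bc Phi (s1 ++ c :: take i s2) * Phi (drop i s2) =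
  l * \sum_(0 <= i < size s2) bc Phi (s1 ++ a :: take i s2) * Phi (drop i s2) +
  \sum_(0 <= i < size s2) bc Phi (s1 ++ b :: take i s2) * Phi (drop i s2).
  rewrite mulr_sumr -big_split; apply: eq_big_nat => i /andP[_ Hi].
  rewrite IH /=; [ring|]. rewrite size_take; case: ifP => //; lia.
rewrite E3 E4 Hl; ring.
Qed.
End Lin.

Section Unit.
Variable C : fieldType.
Variable T : Type.
Variable Phi : seq T -> C.
Variable e : T.
Hypothesis Hu : forall s1 s2, Phi (s1 ++ e :: s2) = Phi (s1 ++ s2).
Hypothesis H1 : Phi [::] = 1.

Lemma bc1 x : bc Phi [:: x] = Phi [:: x].
Proof. by rewrite bcE //= big_geq // subr0. Qed.

Lemma bc_unit_front s : (0 < size s)%N -> bc Phi (e :: s) = 0.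
Proof.
case: s => [|x s2] // _.
have := @bc_merge C T Phi e x x _ s2 [::].
rewrite /= => ->; last by move=> t1 t2; rewrite -cat_rcons -cats1 -catA /= Hu.
by rewrite bc1 -[[:: e]]/([::] ++ e :: [::]) Hu H1 mul1r subrr.
Qed.

Lemma bc_unit_back_mid s1 s2 : (0 < size s1)%N ->
  bc Phi (s1 ++ e :: s2) = if s2 is [::] then 0 else bc Phi (s1 ++ s2).
Proof.
case/lastP: s1 => [|t y] // _.
rewrite -cats1 -catA /=.
have := @bc_merge C T Phi y e y _ s2 t.
move=> ->; last by move=> t1 t2; rewrite -cat1s catA -[(y :: e :: t2)]/([:: y] ++ e :: t2) catA Hu -catA.
case: s2 => [|z s2].
  by rewrite bc1 -[[:: e]]/([::] ++ e :: [::]) Hu H1 mulr1 cats1 subrr.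
by rewrite bc_unit_front // mulr0 subr0 -catA.
Qed.
End Unit.

Section Mult.
Variable C : fieldType.
Variable T : Type.
Variable Phi : seq T -> C.
Variable P : seq T -> Prop.
Hypothesis Ptake : forall k s, P s -> P (take k s).
Hypothesis Pdrop : forall k s, P s -> P (drop k s).
Hypothesis HP : forall s, P s -> Phi s = \prod_(x <- s) Phi [:: x].

Lemma bc_mult s : P s -> (2 <= size s)%N -> bc Phi s = 0.
Proof.
elim: {s}(size s).+1 {-2}s (ltnSn (size s)) => // n IH s Hs Ps s2.
case: s Hs Ps s2 => [|x [|y r]] //= Hs Ps _.
rewrite bcE //= big_nat_recl //=.
rewrite big_nat_cond big1; last first.
  move=> k /andP[/andP[_ Hk] _]; rewrite IH ?mul0r //.
  - rewrite /= size_take; case: ifP => //=; lia.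
  - exact: (Ptake k.+2 Ps).
rewrite addr0 bc1 (HP Ps) (HP (Pdrop 1 Ps)) /= big_cons subrr //.
Qed.
End Mult.

Section MapB.
Variable C : fieldType.
Variables T U : Type.
Variable Phi : seq T -> C.
Variable g : U -> T.
Variable Phi' : seq U -> C.
Hypothesis Hg : forall s, Phi' s = Phi (map g s).
Lemma bc_map s : bc Phi' s = bc Phi (map g s).
Proof.
elim: {s}(size s).+1 {-2}s (ltnSn (size s)) => // n IH s Hs.
case: s Hs => [|x s] Hs; first by rewrite /bc /=.
rewrite bcE // bcE ?size_map //; congr (_ - _); first exact: Hg.
apply: eq_big_nat => k /andP[_ Hk]; rewrite -map_take -map_drop IH ?Hg //.
rewrite size_take; case: ifP => //=; lia.
Qed.
End MapB.

Lemma bcum_bc (C : fieldType) (theta : word -> C) w : bcum theta w = bc theta w.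
Proof.
rewrite /bcum /bc; move: (size w) => n; elim: n w => [|n IH] w //=.
congr (_ - _); apply: eq_bigr => k _; by rewrite IH.
Qed.


Section NCP.
Variable C : fieldType.
Implicit Types (f g : word -> C) (p q : ncp C).

Definition G f (s : seq (ncp C)) := nceval f (foldr (@ncmul C) (ncone C) s).

Lemma nceval_cat f p q : nceval f (p ++ q) = nceval f p + nceval f q.
Proof. by rewrite /nceval big_cat. Qed.

Lemma eq_nceval f g p : f =1 g -> nceval f p = nceval g p.
Proof. by move=> H; rewrite /nceval; apply: eq_bigr => a _; rewrite H. Qed.

Lemma nceval_lin f g c p : nceval (fun w => c * f w + g w) p = c * nceval f p + nceval g p.
Proof. by rewrite /nceval mulr_sumr -big_split; apply: eq_bigr => a _ /=; ring. Qed.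

Lemma nceval_mul f p q :
  nceval f (ncmul p q) = nceval (fun w => nceval (fun w' => f (w ++ w')) q) p.
Proof.
rewrite /nceval /ncmul big_allpairs_dep; apply: eq_bigr => a _ /=.
by rewrite mulr_sumr; apply: eq_bigr => b _ /=; rewrite mulrA.
Qed.

Lemma nceval_one f : nceval f (ncone C) = f [::].
Proof. by rewrite /nceval /ncone big_cons big_nil /= mul1r addr0. Qed.

Lemma nceval_scale f c p : nceval f (ncscale c p) = c * nceval f p.
Proof. by rewrite /nceval big_map mulr_sumr; apply: eq_bigr => a _ /=; rewrite mulrA. Qed.

Lemma nceval_var f b : nceval f (ncvar C b) = f [:: b].
Proof. by rewrite /nceval /ncvar big_cons big_nil /= mul1r addr0. Qed.

Lemma G_nil f : G f [::] = f [::].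
Proof. exact: nceval_one. Qed.

Lemma G_cons f x s : G f (x :: s) = nceval (fun w => G (fun w' => f (w ++ w')) s) x.
Proof. by rewrite /G /= nceval_mul. Qed.

Lemma eq_G f g s : f =1 g -> G f s = G g s.
Proof. exact: eq_nceval. Qed.

Lemma G_lin f g c s : G (fun w => c * f w + g w) s = c * G f s + G g s.
Proof. exact: nceval_lin. Qed.

Lemma G_cat f s1 s2 : G f (s1 ++ s2) = G (fun w => G (fun w' => f (w ++ w')) s2) s1.
Proof.
elim: s1 f => [|x s1 IH] f /=; first by rewrite G_nil; apply: eq_G.
rewrite !G_cons; apply: eq_nceval => w; rewrite IH; apply: eq_G => v.
by apply: eq_G => u; rewrite catA.
Qed.

Lemma G_slot x y z l :
  (forall f, nceval f x = l * nceval f y + nceval f z) ->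
  forall f s1 s2, G f (s1 ++ x :: s2) = l * G f (s1 ++ y :: s2) + G f (s1 ++ z :: s2).
Proof.
move=> H f s1 s2; rewrite !G_cat -G_lin; apply: eq_G => w.
by rewrite !G_cons H.
Qed.

Lemma G_merge f s1 s2 a b : G f (s1 ++ ncmul a b :: s2) = G f (s1 ++ a :: b :: s2).
Proof.
rewrite !G_cat; apply: eq_G => w; rewrite !G_cons nceval_mul.
apply: eq_nceval => v /=; rewrite G_cons; apply: eq_nceval => u /=.
by apply: eq_G => t; rewrite !catA.
Qed.

Lemma G_unit f s1 s2 : G f (s1 ++ ncone C :: s2) = G f (s1 ++ s2).
Proof.
rewrite !G_cat; apply: eq_G => w; rewrite G_cons nceval_one.
by apply: eq_G => t.
Qed.

Lemma G_letters f w : G f (map (@ncvar C) w) = f w.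
Proof.
elim: w f => [|b w IH] f /=; first exact: G_nil.
by rewrite G_cons nceval_var IH.
Qed.

Lemma G_subst (T : eqType) (g1 g2 : T -> ncp C) s :
  (forall x, x \in s -> forall f, nceval f (g1 x) = nceval f (g2 x)) ->
  forall f, G f (map g1 s) = G f (map g2 s).
Proof.
elim: s => [|x s IH] H f //=.
rewrite !G_cons H ?mem_head //; apply: eq_nceval => w.
by apply: IH => y Hy; apply: H; rewrite in_cons Hy orbT.
Qed.
End NCP.

Section Poly.
Variable C : fieldType.
Definition inalg (b : bool) (p : ncp C) := all (fun a => all (pred1 b) a.2) p.
Definition topoly (p : ncp C) : {poly C} := \sum_(a <- p) a.1 *: 'X^(size a.2).

Lemma ncpoly1_eval (f : word -> C) b q :
  nceval f (ncpoly1 b q) = \sum_(0 <= i < size q) q`_i * f (nseq i b).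
Proof. by rewrite /nceval /ncpoly1 big_map /index_iota subn0. Qed.

Lemma sum_poly_ext (q : {poly C}) (g : nat -> C) M : (size q <= M)%N ->
  \sum_(0 <= i < size q) q`_i * g i = \sum_(0 <= i < M) q`_i * g i.
Proof.
move=> HM; rewrite (big_cat_nat (n:=size q) (leq0n _) HM) /=.
suff -> : \sum_(size q <= i < M) q`_i * g i = 0 by rewrite addr0.
rewrite big_nat_cond big1 // => i /andP[/andP[Hi _] _]; by rewrite nth_default ?mul0r.
Qed.

Lemma topoly_eval (f : word -> C) b p : inalg b p ->
  nceval f (ncpoly1 b (topoly p)) = nceval f p.
Proof.
move=> Hp; rewrite ncpoly1_eval.
set M := maxn (size (topoly p)) (\max_(a <- p) (size a.2).+1).
rewrite (sum_poly_ext _ (M := M)) ?leq_maxl //.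
under eq_bigr do rewrite coef_sumMXn big_mkcond mulr_suml.
rewrite exchange_big /nceval; apply: eq_big_seq => a Ha /=.
have Hlt : (size a.2 < M)%N.
  by apply: leq_trans (leq_maxr _ _); apply: (leq_bigmax_seq (F := fun a : C * word => (size a.2).+1)).
rewrite (bigD1_seq (size a.2)) ?mem_index_iota ?iota_uniq //= eqxx.
rewrite big1 ?addr0; last by move=> i /negbTE; rewrite eq_sym => ->; rewrite mul0r.
have /all_pred1P <- := allP Hp a Ha; done.
Qed.
End Poly.


Lemma all_take (T : Type) (P : pred T) k s : all P s -> all P (take k s).
Proof. by rewrite -{1}(cat_take_drop k s) all_cat => /andP[]. Qed.
Lemma all_drop (T : Type) (P : pred T) k s : all P s -> all P (drop k s).
Proof. by rewrite -{1}(cat_take_drop k s) all_cat => /andP[]. Qed.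

Lemma notsorted_split (T : Type) (r : rel T) s : ~~ sorted r s ->
  exists s1 x y s2, s = s1 ++ x :: y :: s2 /\ ~~ r x y.
Proof.
elim: s => [|x t IH] //=; case: t IH => [|y t] IH //=.
case Hxy: (r x y) => /= H.
  have [s1 [x' [y' [s2 [E Hr]]]]] := IH H.
  by exists (x :: s1), x', y', s2; rewrite E.
by exists [::], x, y, t; rewrite Hxy.
Qed.

Section Core.
Variable C : fieldType.
Variables phi psi : word -> C.
Hypothesis Hphi0 : phi [::] = 1.
Hypothesis Hpsi0 : psi [::] = 1.
Hypothesis Hcf : c_free phi psi.

Definition Phi2 (s : seq (bool * ncp C)) := G phi (map snd s).
Definition dflt : bool * ncp C := (lX, [::]).
Definition hd1 (s : seq (bool * ncp C)) := (head dflt s).1.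
Definition lst1 (s : seq (bool * ncp C)) := (last dflt s).1.
Definition okp (s : seq (bool * ncp C)) := all (fun a => inalg a.1 a.2) s.
Definition cen (a : bool * ncp C) : bool * ncp C :=
  (a.1, a.2 ++ ncscale (- nceval psi a.2) (ncone C)).
Definition altr : rel (bool * ncp C) := fun x y => x.1 != y.1.

Lemma nceval_single (f : word -> C) c w : nceval f [:: (c, w)] = c * f w.
Proof. by rewrite /nceval big_cons big_nil addr0. Qed.

Lemma Phi2_nil : Phi2 [::] = 1.
Proof. by rewrite /Phi2 /= G_nil. Qed.

Lemma Phi2_1 x : Phi2 [:: x] = nceval phi x.2.
Proof. by rewrite /Phi2 /= G_cons; apply: eq_nceval => w; rewrite G_nil cats0. Qed.

Lemma Phi2_merge c x y s1 s2 :
  Phi2 (s1 ++ (c, ncmul x.2 y.2) :: s2) = Phi2 (s1 ++ x :: y :: s2).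
Proof. by rewrite /Phi2 !map_cat /= G_merge. Qed.

Lemma Phi2_unit c s1 s2 : Phi2 (s1 ++ (c, ncone C) :: s2) = Phi2 (s1 ++ s2).
Proof. by rewrite /Phi2 !map_cat /= G_unit. Qed.

Lemma Phi2_cen x s1 s2 : Phi2 (s1 ++ x :: s2) =
  nceval psi x.2 * Phi2 (s1 ++ (x.1, ncone C) :: s2) + Phi2 (s1 ++ cen x :: s2).
Proof.
rewrite /Phi2 !map_cat /=; apply: G_slot => f.
by rewrite nceval_cat nceval_one nceval_single; ring.
Qed.

Lemma inalg_mul b (p q : ncp C) : inalg b p -> inalg b q -> inalg b (ncmul p q).
Proof.
move=> /allP Hp /allP Hq; apply/allP => z /allpairsP [[a b'] [Ha Hb ->]] /=.
by rewrite all_cat (Hp _ Ha) (Hq _ Hb).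
Qed.

Lemma inalg_cen x : inalg x.1 x.2 -> inalg (cen x).1 (cen x).2.
Proof. by rewrite /inalg /cen /= all_cat => ->. Qed.

Lemma cen_centered x : nceval psi (cen x).2 = 0.
Proof. by rewrite /cen /= nceval_cat nceval_single Hpsi0; ring. Qed.

Notation bc2 := (bc Phi2).

Lemma bc2_merge c x y s1 s2 :
  bc2 (s1 ++ x :: y :: s2) = bc2 (s1 ++ (c, ncmul x.2 y.2) :: s2) - bc2 (rcons s1 x) * bc2 (y :: s2).
Proof. by apply: bc_merge => t1 t2; rewrite Phi2_merge. Qed.

Lemma bc2_front c s : (0 < size s)%N -> bc2 ((c, ncone C) :: s) = 0.
Proof.
apply: bc_unit_front; last exact: Phi2_nil.
by move=> t1 t2; rewrite Phi2_unit.
Qed.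

Lemma bc2_mid c s1 s2 : (0 < size s1)%N ->
  bc2 (s1 ++ (c, ncone C) :: s2) = if s2 is [::] then 0 else bc2 (s1 ++ s2).
Proof.
apply: bc_unit_back_mid; last exact: Phi2_nil.
by move=> t1 t2; rewrite Phi2_unit.
Qed.

Lemma bc2_cen x s1 s2 : bc2 (s1 ++ x :: s2) =
  nceval psi x.2 * bc2 (s1 ++ (x.1, ncone C) :: s2) + bc2 (s1 ++ cen x :: s2).
Proof. by apply: bc_lin => t1 t2; rewrite Phi2_cen. Qed.

Definition Pc (s : seq (bool * ncp C)) :=
  sorted altr s /\ all (fun a => inalg a.1 a.2 && (nceval psi a.2 == 0)) s.

Lemma Pc_mult s : Pc s -> Phi2 s = \prod_(x <- s) Phi2 [:: x].
Proof.
case: s => [|x0 s0]; first by rewrite Phi2_nil big_nil.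
set s := x0 :: s0 => [[Hs Ha]].
set s' := [seq (a.1, topoly a.2) | a <- s].
have Hsz : (0 < size s')%N by rewrite size_map.
have Halt : alternating s'.
  move=> i Hi; rewrite size_map in Hi.
  rewrite (nth_map dflt) ?(ltnW Hi) // (nth_map dflt) //=.
  by move/(sortedP dflt): Hs => /(_ i Hi).
have Hc : forall a, a \in s' -> nceval psi (ncpoly1 a.1 a.2) = 0.
  move=> a /mapP [x Hx ->] /=.
  have /andP[Hi /eqP H0] := allP Ha x Hx.
  by rewrite topoly_eval.
have [_ Hm] := Hcf Hsz Halt Hc.
have Eq : forall x, x \in s -> forall f,
    nceval f ((fun a : bool * ncp C => ncpoly1 a.1 (topoly a.2)) x) = nceval f (snd x).
  by move=> x Hx f; have /andP[Hi _] := allP Ha x Hx; rewrite topoly_eval.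
move: Hm; rewrite -foldr_map -map_comp.
rewrite -/(G phi _) (G_subst Eq) -/(Phi2 s) => ->.
rewrite big_map; apply: eq_big_seq => x Hx /=.
by rewrite Phi2_1 Eq.
Qed.

Lemma bc2_alt_centered s : Pc s -> (2 <= size s)%N -> bc2 s = 0.
Proof.
apply: bc_mult; last exact: Pc_mult.
- move=> k t [H1 H2]; split; [exact: take_sorted | exact: all_take].
- move=> k t [H1 H2]; split; [exact: drop_sorted | exact: all_drop].
Qed.

Lemma hd1_cons x s : hd1 (x :: s) = x.1. Proof. by []. Qed.
Lemma lst1_cat s t : (0 < size t)%N -> lst1 (s ++ t) = lst1 t.
Proof. by case: t => // z t _; rewrite /lst1 last_cat. Qed.

Lemma hd1_cencat k s t : (0 < k)%N -> (0 < size s)%N -> hd1 (map cen (take k s) ++ t) = hd1 s.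
Proof. by case: k => // k; case: s. Qed.

Lemma core n : forall s, (size s < n)%N -> okp s -> (2 <= size s)%N -> hd1 s != lst1 s -> bc2 s = 0.
Proof.
elim: n => [|n IH] s //= Hsn Hok H2 Hhl.
have IH' : forall t, (size t < size s)%N -> okp t -> (2 <= size t)%N -> hd1 t != lst1 t -> bc2 t = 0.
  move=> t Ht; apply: IH; lia.
case Hso: (sorted altr s).
  (* alternating case: center everything *)
  have Hk : forall k, (k <= size s)%N -> bc2 s = bc2 (map cen (take k s) ++ drop k s).
    elim=> [|k IHk] Hk; first by rewrite take0 drop0.
    rewrite IHk ?(ltnW Hk) // (drop_nth dflt Hk) bc2_cen.
    rewrite (take_nth dflt Hk) map_rcons cat_rcons.
    suff -> : bc2 (map cen (take k s) ++ ((nth dflt s k).1, ncone C) :: drop k.+1 s) = 0 by rewrite mulr0 add0r.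
    case: k IHk Hk => [|k] _ Hk.
      rewrite take0 /= bc2_front // size_drop; lia.
    have Hpos : (0 < size (map cen (take k.+1 s)))%N by rewrite size_map size_take; case: ifP => _; lia.
    rewrite (bc2_mid _ _ Hpos).
    case E2: (drop k.+2 s) => [|z t2] //; rewrite -E2.
    apply: IH'.
    - rewrite size_cat size_map !size_take !size_drop; case: ifP; lia.
    - rewrite /okp all_cat all_map; apply/andP; split.
        apply/allP => y /(allP (all_take k.+1 Hok)) /=; exact: inalg_cen.
      exact: all_drop.
    - rewrite size_cat size_map !size_take !size_drop; case: ifP; move: (size_drop k.+2 s); rewrite E2 /=; lia.
    - rewrite hd1_cencat; last (by lia); last (by lia).
      rewrite lst1_cat ?E2 // -E2.
      suff -> : lst1 (drop k.+2 s) = lst1 s by [].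
      by rewrite -{2}(cat_take_drop k.+2 s) lst1_cat // E2.
  rewrite (Hk (size s)) // take_size drop_size cats0.
  apply: bc2_alt_centered; last by rewrite size_map.
  split.
    rewrite sorted_map; apply: sub_sorted Hso => a b; done.
  rewrite all_map; apply/allP => y Hy /=.
  rewrite inalg_cen ?cen_centered ?eqxx //; exact: (allP Hok).
(* non-alternating case: merge *)
have [s1 [x [y [s2 [E Hxy]]]]] := notsorted_split (negbT Hso).
move: Hxy; rewrite /altr negbK => /eqP Hxy.
have Hokx : inalg x.1 x.2 by apply: (allP Hok); rewrite E mem_cat mem_head orbT.
have Hoky : inalg x.1 y.2 by rewrite Hxy; apply: (allP Hok); rewrite E mem_cat !inE eqxx !orbT.
have Hok1 : okp s1 by move: Hok; rewrite E /okp all_cat => /andP[].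
have Hok2 : okp s2 by move: Hok; rewrite E /okp all_cat /= => /and3P[_ _ /andP[]].
subst s; clear Hso Hok Hsn IH; rewrite (bc2_merge x.1).
rewrite IH'; first last.
- case: s1 Hhl H2 {Hok1 IH'} => [|z s1] Hhl H2.
    case: s2 Hhl H2 {Hok2} => [|z s2] Hhl H2; first by move: Hhl; rewrite /hd1 /lst1 /= Hxy eqxx.
    by move: Hhl; rewrite /hd1 !lst1_cat //.
  case: s2 Hhl H2 {Hok2} => [|w s2] Hhl H2.
    by move: Hhl; rewrite /hd1 /= -!cat_cons !lst1_cat // /lst1 /= Hxy.
  by move: Hhl; rewrite /hd1 /= -!cat_cons !lst1_cat //.
- move: H2 Hhl; rewrite !size_cat /=.
  case: s1 {Hok1 IH'} => [|z s1] /=; last by lia.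
  case: s2 {Hok2} => [|w s2] /=; last by lia.
  by rewrite /hd1 /lst1 /= Hxy eqxx.
- by move: Hok1 Hok2; rewrite /okp all_cat /= => -> ->; rewrite inalg_mul.
- rewrite !size_cat /=; lia.
rewrite sub0r.
case Hx1: (x.1 == hd1 (s1 ++ [:: x, y & s2])); clear H2.
  (* then y::s2 has different ends *)
  rewrite (IH' (y :: s2)) ?mulr0 ?oppr0 //.
  - rewrite size_cat /=; lia.
  - by move: Hok2; rewrite /okp /= -Hxy Hoky => ->.
  - case: s2 Hhl Hx1 {Hok2 IH'} => [|w s2] Hhl Hx1 //=.
    by move: Hhl; rewrite -(eqP Hx1) /lst1 last_cat /= Hxy eqxx.
  - have Hl : lst1 (s1 ++ [:: x, y & s2]) = lst1 (y :: s2) by rewrite -cat_rcons lst1_cat.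
    by rewrite hd1_cons -Hxy (eqP Hx1) -Hl.
rewrite (IH' (rcons s1 x)) ?mul0r ?oppr0 //.
- rewrite size_rcons size_cat /=; lia.
- by move: Hok1; rewrite /okp all_rcons Hokx => ->.
- case: s1 Hx1 Hhl {Hok1 IH'} => [|z s1] Hx1 Hhl /=; last by rewrite size_rcons.
  by move: Hx1; rewrite /hd1 /= eqxx.
- case: s1 Hx1 Hhl {Hok1 IH'} => [|z s1] Hx1 Hhl; first by move: Hx1; rewrite /hd1 /= eqxx.
  by move: Hx1; rewrite /hd1 /lst1 /= last_rcons eq_sym => ->.
Qed.

End Core.


Section Mat.
Variable C : fieldType.
Variable N : nat.
Variables A B : 'M[C]_N.

Definition Gm (f : word -> C) n := mxapply f (pencil_pow A B n).

Lemma eq_Gm f g n : f =1 g -> Gm f n = Gm g n.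
Proof. by move=> H; apply/matrixP => i j; rewrite !mxE; apply: eq_nceval. Qed.

Lemma Gm_lin f g c n : Gm (fun w => c * f w + g w) n = c *: Gm f n + Gm g n.
Proof. by apply/matrixP => i j; rewrite !mxE nceval_lin. Qed.

Lemma Gm_zero n : Gm (fun _ => 0) n = 0.
Proof. by apply/matrixP => i j; rewrite !mxE /nceval big1 // => a _; rewrite mulr0. Qed.

Lemma Gm0 f : Gm f 0 = (f [::])%:M.
Proof.
apply/matrixP => i j; rewrite /Gm /pencil_pow /= !mxE.
by case: (i == j); rewrite ?nceval_one //= /nceval big_nil.
Qed.

Lemma GmS f n : Gm f n.+1 =
  A *m Gm (fun w => f (lX :: w)) n + B *m Gm (fun w => f (lY :: w)) n.
Proof.
apply/matrixP => i j; rewrite /Gm /pencil_pow iterS -/(pencil_pow A B n) !mxE.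
rewrite /nceval big_flatten big_map -/(nceval _ _).
rewrite -!(big_enum _ _ (mem 'I_N)) /= -big_split /=.
apply: eq_bigr => k _.
rewrite -/(nceval f _) nceval_mul /pencil !mxE nceval_cat !nceval_scale !nceval_var.
by [].
Qed.

Definition hconv (g1 g2 : word -> C) (w : word) :=
  \sum_(0 <= k < (size w).+1) g1 (take k w) * g2 (drop k w).

Lemma hconv_cons g1 g2 b w :
  hconv g1 g2 (b :: w) = g1 [::] * g2 (b :: w) + hconv (fun v => g1 (b :: v)) g2 w.
Proof. by rewrite /hconv /= big_nat_recl //=. Qed.

Lemma Gm_conv g2 n : forall g1,
  Gm (hconv g1 g2) n = \sum_(0 <= k < n.+1) Gm g1 k *m Gm g2 (n - k).
Proof.
elim: n => [|n IH] g1.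
  by rewrite big_nat1 !Gm0 /hconv /= big_nat1 /= -scalar_mxM.
rewrite GmS.
have HX : forall b, Gm (fun w => hconv g1 g2 (b :: w)) n =
    g1 [::] *: Gm (fun w => g2 (b :: w)) n + Gm (hconv (fun v => g1 (b :: v)) g2) n.
  by move=> b; rewrite -Gm_lin; apply: eq_Gm => w /=; rewrite hconv_cons.
rewrite !HX !IH.
rewrite [X in _ = X]big_nat_recl // Gm0 mul_scalar_mx subn0 [Gm g2 n.+1]GmS.
under [X in _ = _ + X]eq_bigr do rewrite subSS GmS mulmxDl -!mulmxA.
rewrite big_split /= -!mulmx_sumr !mulmxDr.
by rewrite scalerDr -!scalemxAr addrACA.
Qed.
End Mat.


Section Final.
Variable C : fieldType.
Variables phi psi : word -> C.
Hypothesis Hphi0 : phi [::] = 1.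
Hypothesis Hpsi0 : psi [::] = 1.
Hypothesis Hcf : c_free phi psi.

Lemma bcum_vanish x w : last x w != x -> bcum phi (x :: w) = 0.
Proof.
move=> Hl; rewrite bcum_bc.
rewrite (bc_map (Phi := Phi2 phi) (g := fun b => (b, ncvar C b))); last first.
  by move=> s; rewrite /Phi2 -map_comp G_letters.
apply: (core Hphi0 Hpsi0 Hcf (n := (size w).+2)).
- by rewrite size_map.
- by apply/allP => a /mapP [b _ ->]; rewrite /inalg /= andbT /= eqxx.
- case: w Hl => [|y w] /=; first by rewrite eqxx.
  by rewrite size_map.
- rewrite /hd1 /lst1 /=.
  suff -> : (last (dflt C) [seq (b, ncvar C b) | b <- x :: w]).1 = last x w by rewrite eq_sym.
  elim: w x {Hl} => [|y w IH] x //=; exact: (IH y).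
Qed.

Definition bd (v : word) : C := if v is [::] then 0 else bcum phi v.

Lemma phi_conv w : phi w = 1 * hconv bd phi w + (w == [::])%:R.
Proof.
rewrite mul1r /hconv; case: w => [|x w]; first by rewrite big_nat1 /= mul0r add0r Hphi0.
rewrite big_nat_recl //= mul0r add0r addr0.
have Hb := bcE phi (s := x :: w) isT.
rewrite big_nat_recr //=.
rewrite take_size drop_size Hphi0 mulr1 /= in Hb *.
under eq_bigr do rewrite bcum_bc.
rewrite bcum_bc Hb; ring.
Qed.

Lemma bd_cons b w : bd (b :: w) = bdelta phi b (b :: w).
Proof.
rewrite /bd /bdelta eqxx /=.
case: eqP => // /eqP H; by rewrite bcum_vanish.
Qed.

Variable N : nat.
Variables A B : 'M[C]_N.

Lemma Fphi_Gm b n : Fphi phi b A B n = Gm A B (fun w => bdelta phi b (b :: w)) n.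
Proof.
by apply/matrixP => i j; rewrite !mxE nceval_mul nceval_var.
Qed.

Lemma M_rec n : Mphi phi A B n.+1 =
  \sum_(0 <= k < n.+1) (A *m Fphi phi lX A B k + B *m Fphi phi lY A B k) *m Mphi phi A B (n - k)%N.
Proof.
change (Mphi phi A B n.+1) with (Gm A B phi n.+1).
rewrite (eq_Gm A B _ phi_conv) Gm_lin scale1r.
rewrite [Gm A B (fun w => (w == [::])%:R) n.+1]GmS.
rewrite (@eq_Gm _ _ A B (fun w => ((lY :: w) == [::])%:R) (fun _ => 0) n) //.
rewrite Gm_zero !mulmx0 addr0 Gm_conv big_nat_recl // Gm0 /= mul_scalar_mx scale0r add0r.
rewrite addr0; apply: eq_bigr => k _; rewrite GmS subSS !Fphi_Gm.
have E : forall b, Gm A B (fun w => bd (b :: w)) k = Gm A B (fun w => bdelta phi b (b :: w)) k.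
  by move=> b; apply: eq_Gm => w; exact: bd_cons.
by rewrite !E.
Qed.
End Final.

Section SerInv.
Variable C : fieldType.
Variable N : nat.
Variable S : mser C N.

Lemma sis_size n : size (ser_inv_seq S n) = n.+1.
Proof. by elim: n => [|n IH] //=; rewrite size_rcons IH. Qed.

Lemma nth_sis n k : (k <= n)%N -> nth 0 (ser_inv_seq S n) k = ser_inv S k.
Proof.
elim: n k => [|n IH] k Hk; first by case: k Hk.
rewrite leq_eqVlt in Hk; case/orP: Hk => [/eqP->|Hk] //.
by rewrite /= nth_rcons sis_size Hk IH.
Qed.

Lemma ser_invS n : ser_inv S n.+1 =
  - invmx (S 0%N) *m \sum_(1 <= k < n.+2) (S k *m ser_inv S (n.+1 - k)%N).
Proof.
rewrite {1}/ser_inv /= nth_rcons sis_size ltnn eqxx.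
congr (_ *m _); apply: eq_big_nat => k /andP[Hk1 Hk2].
by rewrite nth_sis //; lia.
Qed.
End SerInv.

Lemma part1 (C : fieldType) (N : nat) (phi psi : word -> C) (A B : 'M[C]_N) :
  phi [::] = 1 -> psi [::] = 1 -> c_free phi psi ->
  forall n, Mphi phi A B n = ser_inv (denom phi A B) n.
Proof.
move=> H0 H1 Hcf n.
elim: n {-2}n (leqnn n) => [|n IH] m Hm.
  rewrite leqn0 in Hm; move/eqP: Hm => ->.
  change (Mphi phi A B 0%N) with (Gm A B phi 0); rewrite Gm0 H0.
  by rewrite /ser_inv /= invmx1.
rewrite leq_eqVlt in Hm; case/orP: Hm => [/eqP->|Hm]; last by apply: IH.
rewrite (M_rec H0 H1 Hcf) ser_invS /= invmx1 mulNmx mul1mx big_add1 /=.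
rewrite -sumrN; apply: eq_big_nat => k /andP[_ Hk].
rewrite subSS IH; last by lia.
by rewrite -mulNmx opprD !opprK.
Qed.

Lemma nceval_coef (C : fieldType) (f : word -> C) (p : ncp C) (ws : seq word) :
  uniq ws -> (forall a, a \in p -> a.2 \in ws) ->
  nceval f p = \sum_(w <- ws) nccoef p w * f w.
Proof.
move=> Hu Hin.
have -> : \sum_(w <- ws) nccoef p w * f w =
   \sum_(w <- ws) \sum_(a <- p) (if a.2 == w then a.1 * f a.2 else 0).
  apply: eq_bigr => w _; rewrite /nccoef big_mkcond mulr_suml; apply: eq_bigr => a _.
  by case: eqP => [->|_]; rewrite ?mul0r.
rewrite exchange_big /nceval; apply: eq_big_seq => a Ha /=.
rewrite (bigD1_seq a.2) ?Hin //= eqxx big1 ?addr0 // => w Hw.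
by rewrite eq_sym (negbTE Hw).
Qed.

Lemma nceval_eqcoef (C : fieldType) (f : word -> C) (p q : ncp C) :
  (forall w, nccoef p w = nccoef q w) -> nceval f p = nceval f q.
Proof.
move=> H.
have Hu := undup_uniq (map snd (p ++ q)).
rewrite (nceval_coef f Hu) ?(nceval_coef f Hu (p := q)).
- by apply: eq_bigr => w _; rewrite H.
- by move=> a Ha; rewrite mem_undup map_f // mem_cat Ha orbT.
- by move=> a Ha; rewrite mem_undup map_f // mem_cat Ha.
Qed.

Lemma uPsiv_eval (C : fieldType) (N : nat) (phi : word -> C) (A B : 'M[C]_N) u v k :
  nceval phi (uPsiv A B u v k) = (u^T *m Mphi phi A B k *m v) 0 0.
Proof.
rewrite /uPsiv /nceval big_flatten /= big_allpairs_dep /=.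
rewrite !mxE (big_enum _ _ (mem 'I_N)) /=.
under eq_bigr do rewrite (big_enum _ _ (mem 'I_N)) /=.
rewrite exchange_big /=; apply: eq_bigr => j _.
rewrite !mxE mulr_suml; apply: eq_bigr => i _.
rewrite -/(nceval phi _) nceval_scale !mxE; ring.
Qed.


Unset Implicit Arguments.

Theorem theorem4 (C : fieldType) (N : nat) (phi psi : word -> C)
    (A B : 'M[C]_N) :
  phi [::] = 1 -> psi [::] = 1 -> c_free phi psi ->
  (forall n, Mphi phi A B n = ser_inv (denom phi A B) n) /\
  (forall (P : ncp C) (m : nat) (u v : 'cV[C]_N),
     (0 < m)%N -> ncdeg_eq P m ->
     (forall k w, nccoef (geo P m k) w = nccoef (uPsiv A B u v k) w) ->
     forall k, nceval phi (geo P m k) = (u^T *m Mphi phi A B k *m v) 0 0).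
Proof.
move=> H0 H1 Hcf; split; first by move=> n; apply: (part1 (psi := psi)).

move=> P m u v _ _ Hc k.
rewrite (nceval_eqcoef phi (Hc k)).
exact: uPsiv_eval.
Qed.
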